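(* Let $T$ be a subset of $\mathbb{N}_0^d$ whose affine span has dimension $1$. Then the $1$-completion of $T$ equals $\Lambda(T)\cap\mathbb{N}_0^d$.
   Context: $\mathbb{N}_0=\{0,1,2,\dots\}$. For nonempty $\Gamma\subseteq\mathbb{N}_0^d$, $\Lambda(\Gamma)$ is the coset in $\mathbb{Z}^d$ generated by $\Gamma$ (smallest coset of a subgroup of $\mathbb{Z}^d$ containing $\Gamma$); each $\lambda\in\Lambda(\Gamma)$ can be written $\lambda=\gamma+\sum_{\alpha\in\Gamma,\alpha\neq\gamma}m_{\gamma,\alpha}(\alpha-\gamma)$ with $\gamma\in\Gamma$ and integers $m_{\gamma,\alpha}$, finitely many nonzero. $d(\Gamma,\lambda)$ is the infimum over all such representations of $\max\big(\sum_{m_{\gamma,\alpha}>0}m_{\gamma,\alpha},-\sum_{m_{\gamma,\alpha}<0}m_{\gamma,\alpha}\big)$, and $E_n(\Gamma)=\{\lambda\in\Lambda(\Gamma)\cap\mathbb{N}_0^d:d(\Gamma,\lambda)\leq n\}$. Set $E_n^1(T)=E_n(T)$, $E_n^{k+1}(T)=E_n(E_n^k(T))$, and the $n$-completion $E_n^\infty(T)=\bigcup_{k\geq1}E_n^k(T)$. *)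

(* Defs.v *)
From HB Require Import structures.
From mathcomp Require Import all_boot all_order all_algebra.
Set Implicit Arguments. Unset Strict Implicit. Unset Printing Implicit Defensive.
Import Order.TTheory GRing.Theory Num.Theory.
Local Open Scope ring_scope.

Definition pt (d : nat) := 'rV[int]_d.

Definition nonneg {d} (x : pt d) : Prop := forall i, 0 <= x 0 i.

Definition is_subgroup {d} (H : pt d -> Prop) : Prop :=
  H 0 /\ (forall x y, H x -> H y -> H (x - y)).

(* Lambda(G): the smallest coset v + H of a subgroup H of Z^d containing G
   (intersection of all such cosets). *)
Definition Lam {d} (G : pt d -> Prop) (l : pt d) : Prop :=
  forall (H : pt d -> Prop) (v : pt d), is_subgroup H ->
    (forall g, G g -> H (g - v)) -> H (l - v).

(* A representation l = g + sum_{a in G, a <> g} m_a (a - g), with finitely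
   many nonzero m_a, all nonzero indices listed in the duplicate-free list s. *)
Definition rep {d} (G : pt d -> Prop) (l g : pt d) (m : pt d -> int)
  (s : seq (pt d)) : Prop :=
  [/\ G g, uniq s, (forall a, a \in s -> G a /\ a != g),
      (forall a, a \notin s -> m a = 0) &
      l = g + \sum_(a <- s) ((a - g) *~ m a)].

Definition rep_cost {d} (m : pt d -> int) (s : seq (pt d)) : int :=
  Num.max (\sum_(a <- s | 0 < m a) m a) (\sum_(a <- s | m a < 0) (- m a)).

(* d(G, l) <= n : the infimum (over nonnegative integers, +oo if no
   representation) is <= n iff some representation has cost <= n. *)
Definition dist_le {d} (G : pt d -> Prop) (l : pt d) (n : nat) : Prop :=
  exists g m s, rep G l g m s /\ rep_cost m s <= n%:Z.

Definition En {d} (n : nat) (G : pt d -> Prop) (l : pt d) : Prop :=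
  [/\ Lam G l, nonneg l & dist_le G l n].

(* Eiter n k T = E_n^{k+1}(T) *)
Fixpoint Eiter {d} (n k : nat) (T : pt d -> Prop) : pt d -> Prop :=
  match k with
  | 0 => En n T
  | k'.+1 => En n (Eiter n k' T)
  end.

(* n-completion E_n^oo(T) = union over k >= 1 of E_n^k(T) *)
Definition Einf {d} (n : nat) (T : pt d -> Prop) (l : pt d) : Prop :=
  exists k, Eiter n k T l.

Definition ratv {d} (x : pt d) : 'rV[rat]_d := map_mx (fun z : int => z%:~R) x.

(* The affine span (over Q, equivalently R) of T has dimension 1:
   T is contained in a line x0 + Q v (v <> 0) through a point x0 of T,
   and T contains a point other than x0 (so its affine span is not a point). *)
Definition affdim1 {d} (T : pt d -> Prop) : Prop :=
  exists (x0 : pt d) (v : 'rV[rat]_d),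
    [/\ T x0, v != 0,
        (forall t, T t -> exists c : rat, ratv (t - x0) = c *: v) &
        (exists t, T t /\ t != x0)].

(* Main.v *)
Require Import Defs.
From mathcomp Require Import all_boot all_order all_algebra.
From mathcomp Require Import zify ring lra.
From Stdlib Require Import Classical.
Set Implicit Arguments. Unset Strict Implicit. Unset Printing Implicit Defensive.
Import Order.TTheory GRing.Theory Num.Theory.
Local Open Scope ring_scope.

Lemma lam_sub d (G T : pt d -> Prop) l :
  (forall g, G g -> Lam T g) -> Lam G l -> Lam T l.
Proof. move=> HG HL H v Hs HT; apply: HL => // g Gg; exact: HG g Gg H v Hs HT. Qed.

Lemma Eiter_prop d k (T : pt d -> Prop) l :
  Eiter 1 k T l -> Lam T l /\ nonneg l.
Proof.
elim: k l => [|k IH] l /=; first by case.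
case=> HL Hn _; split => //; apply: lam_sub HL => g /IH []//.
Qed.

Lemma En_incl d n (G : pt d -> Prop) x :
  (forall y, G y -> nonneg y) -> G x -> En n G x.
Proof.
move=> Gn Gx; split; first by move=> H v _ HG; exact: HG.
  exact: Gn.
exists x, (fun _ => 0), [::]; split.
  by split => //; rewrite big_nil addr0.
by rewrite /rep_cost !big_nil maxxx.
Qed.

Lemma Eiter_mono d k j (T : pt d -> Prop) x :
  (forall y, T y -> nonneg y) -> (k <= j)%N -> Eiter 1 k T x -> Eiter 1 j T x.
Proof.
move=> Tn /subnKC <-; elim: (j - k)%N => [|m IH]; first by rewrite addn0.
move=> /IH H; rewrite addnS /=; apply: En_incl => // y.
by move=> /Eiter_prop [].
Qed.

Lemma En_comb d (G : pt d -> Prop) a b c :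
  G a -> G b -> G c -> nonneg (a + c - b) -> En 1 G (a + c - b).
Proof.
move=> Ga Gb Gc Hn; split => //.
  move=> H v [H0 Hsub] HG.
  have Hadd : forall x y, H x -> H y -> H (x + y).
    move=> x y Hx Hy; have := Hsub _ _ Hx (Hsub _ _ H0 Hy).
    by rewrite sub0r opprK.
  have -> : a + c - b - v = (a - v) + (c - v) - (b - v).
    apply/matrixP => p q; rewrite !mxE; ring.
  by apply: Hsub; [apply: Hadd|]; apply: HG.
have [eab|nab] := eqVneq a b.
  exists c, (fun _ => 0), [::]; split.
    split => //; rewrite big_nil addr0 eab; apply/matrixP => p q; rewrite !mxE; ring.
  by rewrite /rep_cost !big_nil maxxx.
have [ecb|ncb] := eqVneq c b.
  exists a, (fun _ => 0), [::]; split.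
    split => //; rewrite big_nil addr0 ecb; apply/matrixP => p q; rewrite !mxE; ring.
  by rewrite /rep_cost !big_nil maxxx.
have [eac|nac] := eqVneq a c.
  exists a, (fun y => if y == b then -1 else 0), [:: b]; split.
    split => //.
    - by move=> y; rewrite inE => /eqP ->; rewrite eq_sym.
    - by move=> y; rewrite inE => /negbTE ->.
    rewrite big_cons big_nil eqxx addr0 eac.
    apply/matrixP => p q; rewrite !mxE; ring.
  by rewrite /rep_cost !big_cons !big_nil eqxx /=.
exists c, (fun y => if y == a then 1 else if y == b then -1 else 0), [:: a; b]; split.
  split => //.
  - by rewrite /= inE nab.
  - by move=> y; rewrite !inE => /orP [] /eqP ->; split => //; rewrite eq_sym.
  - by move=> y; rewrite !inE negb_or => /andP [/negbTE -> /negbTE ->].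
  rewrite !big_cons big_nil eqxx (eq_sym b a) (negbTE nab) eqxx addr0.
  apply/matrixP => p q; rewrite !mxE; ring.
by rewrite /rep_cost !big_cons !big_nil eqxx (eq_sym b a) (negbTE nab) eqxx /=.
Qed.

Lemma Einf_comb d (T : pt d -> Prop) a b c :
  (forall y, T y -> nonneg y) ->
  Einf 1 T a -> Einf 1 T b -> Einf 1 T c -> nonneg (a + c - b) -> Einf 1 T (a + c - b).
Proof.
move=> Tn [ka Ha] [kb Hb] [kc Hc] Hn.
set K := maxn ka (maxn kb kc).
exists K.+1 => /=; apply: En_comb => //.
- by apply: (Eiter_mono Tn _ Ha); rewrite /K; lia.
- by apply: (Eiter_mono Tn _ Hb); rewrite /K; lia.
- by apply: (Eiter_mono Tn _ Hc); rewrite /K; lia.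
Qed.

Lemma step d (S : pt d -> Prop) a b :
  (forall x y z : pt d, S x -> S y -> S z -> nonneg (x + z - y) -> S (x + z - y)) ->
  S a -> S b -> nonneg a ->
  forall n : nat, nonneg (a + n%:Z *: (b - a)) -> S (a + n%:Z *: (b - a)).
Proof.
move=> Sc Sa Sb na.
have cl : forall n : nat, nonneg (a + (n.+1)%:Z *: (b - a)) ->
    S (a + n%:Z *: (b - a)) /\ S (a + (n.+1)%:Z *: (b - a)).
  elim => [|n IH] H.
    split; first by rewrite scale0r addr0.
    by rewrite scale1r addrC subrK.
  have H1 : nonneg (a + (n.+1)%:Z *: (b - a)).
    move=> j; have := H j; have := na j; rewrite !mxE.
    move: (b 0 j - a 0 j) (a 0 j) => w x h1 h2; nia.
  have [h1 h2] := IH H1; split => //.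
  have -> : a + (n.+2)%:Z *: (b - a) =
     (a + (n.+1)%:Z *: (b - a)) + (a + (n.+1)%:Z *: (b - a)) - (a + n%:Z *: (b - a)).
    apply/matrixP => p q; rewrite !mxE; ring.
  apply: Sc => //; have -> : (a + (n.+1)%:Z *: (b - a)) + (a + (n.+1)%:Z *: (b - a))
     - (a + n%:Z *: (b - a)) = a + (n.+2)%:Z *: (b - a) => //.
  apply/matrixP => p q; rewrite !mxE; ring.
case=> [|n] H; first by rewrite scale0r addr0.
by case: (cl n H).
Qed.
Lemma abs_aux (U Y X Z : int) : U * X = Y * Z -> 0 <= Y * U -> (absz U)%:Z * X = (absz Y)%:Z * Z.
Proof.
move=> h1 h2; rewrite !abszE.
case: (ltrgtP 0 U) => hU.
- have hY : 0 <= Y by rewrite -(pmulr_lge0 _ hU).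
  by rewrite !ger0_norm // ltW.
- have hY : Y <= 0. by move: h2; rewrite nmulr_lge0.
  by rewrite (ler0_norm (ltW hU)) (ler0_norm hY) !mulNr h1.
- rewrite -hU mul0r in h1 *. 
  case: (lerP 0 Y) => hY; [rewrite ger0_norm // | rewrite ltr0_norm // mulNr]; rewrite -h1 ?oppr0 //.
Qed.

Lemma np_aux (a b c D Nn Q R: int): 0 <= b -> 0 <= a -> D*(a-b) = Nn*(c-b) -> Nn = Q*D + R -> 0 <= R -> 0 <= Q -> 0 < D -> 0 <= b + Q*(c-b).
Proof.
move=> hb ha E hN hR hQ hD.
have [N0|Npos] := lerP Nn 0.
  have Q0 : Q = 0 by nia.
  by rewrite Q0 mul0r addr0.
have key : Nn * (b + Q*(c-b)) = R * b + Q * D * a.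
  rewrite mulrDr mulrCA -E hN; ring.
have : 0 <= Nn * (b + Q*(c-b)) by rewrite key; nia.
by rewrite pmulr_rge0.
Qed.

Lemma fin_aux (A U : int) (D R : nat) : D%:Z * A = R%:Z * U -> absz U = D ->
  (A != 0 -> D <= absz A)%N -> (0 < R)%N -> (R < D)%N -> False.
Proof.
move=> h hU hm hR hRD.
have := congr1 absz h; rewrite !abszM /= hU => h2.
have hA : absz A = R by nia.
have : A != 0 by apply/eqP => A0; move: hA; rewrite A0 /=; lia.
move/hm; lia.
Qed.

Lemma key d (S : pt d -> Prop) (i : 'I_d) (delta : nat) (s s' : pt d) :
  (forall x y z : pt d, S x -> S y -> S z -> nonneg (x + z - y) -> S (x + z - y)) ->
  (forall x : pt d, S x -> nonneg x) ->
  (forall p q a b : pt d, S p -> S q -> S a -> S b ->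
      (p - q) 0 i *: (a - b) = (a - b) 0 i *: (p - q)) ->
  (forall p q : pt d, S p -> S q -> p 0 i != q 0 i -> (delta <= absz (p 0%R i - q 0%R i))%N) ->
  S s -> S s' -> absz (s' 0%R i - s 0%R i) = delta -> (0 < delta)%N ->
  forall t : pt d, S t -> 0 <= (t 0 i - s 0 i) * (s' 0 i - s 0 i) ->
  exists k : int, t - s = k *: (s' - s).
Proof.
move=> Sc Sn par mn Ss Ss' hd dpos t St hs.
have P := par s' s t s Ss' Ss St Ss.
set N := absz (t 0%R i - s 0%R i).
have E : forall j, delta%:Z * (t 0 j - s 0 j) = N%:Z * (s' 0 j - s 0 j).
  move=> j; have := congr1 (fun M : pt d => M 0 j) P; rewrite !mxE.
  rewrite /N -hd; move: hs; move: (t 0 i) (s 0 i) (s' 0 i) (t 0 j) (s 0 j) (s' 0 j).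
  move=> a b c x y z h1 h2.
  exact (abs_aux h2 h1).
set q := (N %/ delta)%N; set r := (N %% delta)%N.
have hN : N = (q * delta + r)%N by rewrite /q /r -divn_eq.
have hr : (r < delta)%N by rewrite /r ltn_mod.
set p := s + q%:Z *: (s' - s).
have hN' : N%:Z = q%:Z * delta%:Z + r%:Z by rewrite hN PoszD PoszM.
have Np : nonneg p.
  move=> j; rewrite /p !mxE.
  apply: (np_aux (a := t 0 j) (D := delta%:Z) (Nn := N%:Z) (R := r%:Z)) => //.
  - by have := Sn _ Ss j.
  - by have := Sn _ St j.
  all: try lia.
have Sp : S p by apply: step => //; exact: Sn.
have E2 : forall j, delta%:Z * (t 0 j - p 0 j) = r%:Z * (s' 0 j - s 0 j).
  move=> j; rewrite /p !mxE opprD addrA mulrBr E hN'; ring.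
case: (posnP r) => [r0|rpos].
  exists q%:Z; apply/matrixP => a j; rewrite [a]ord1; have := E2 j; rewrite r0 /p !mxE.
  move: (t 0 j) (s 0 j) (s' 0 j) dpos => a' b c; nia.
exfalso; apply: (fin_aux (E2 i) hd _ rpos hr).
by move=> hA; apply: mn => //; move: hA; apply: contra => /eqP ->; rewrite subrr.
Qed.

Lemma minimal (Q : nat -> Prop) n : Q n -> exists m, Q m /\ forall k, (k < m)%N -> ~ Q k.
Proof.
elim/ltn_ind: n => n IH Qn.
case: (classic (exists k, (k < n)%N /\ Q k)) => [[k [hk Qk]]|hno].
  exact: IH k hk Qk.
exists n; split => // k hk Qk; apply: hno; exists k; split => //.
Qed.

Lemma ratvE d (y : pt d) j : ratv y 0 j = (y 0 j)%:~R.
Proof. by rewrite mxE. Qed.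

Theorem lemma3p2 (d : nat) (T : pt d -> Prop) :
  (forall t, T t -> nonneg t) -> affdim1 T ->
  forall l : pt d, Einf 1 T l <-> (Lam T l /\ nonneg l).
Proof.
move=> Tn [x0 [v [Tx0 vn0 Tline [t [Tt tne]]]]] l; split.
  by case=> k /Eiter_prop.
case=> Ll nl.
set S := Einf 1 T.
have Sc : forall x y z : pt d, S x -> S y -> S z -> nonneg (x + z - y) -> S (x + z - y).
  by move=> x y z; apply: Einf_comb.
have Sn : forall x : pt d, S x -> nonneg x by move=> x [k /Eiter_prop []].
have ST : forall x, T x -> S x by move=> x Tx; exists 0%N => /=; apply: En_incl.
have Sdir : forall p, S p -> exists c : rat, forall j, (p 0 j)%:~R = (x0 0 j)%:~R + c * v 0 j.
  move=> p [k /Eiter_prop [Lp _]].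
  have := Lp (fun y => exists c : rat, ratv y = c *: v) x0.
  case.
  - split; first by exists 0; apply/matrixP => a j; rewrite scale0r !mxE.
    move=> a b [ca ea] [cb eb]; exists (ca - cb).
    apply/matrixP => a' j; have := congr1 (fun M : 'M[rat]_(1,d) => M a' j) ea; have := congr1 (fun M : 'M[rat]_(1,d) => M a' j) eb.
    rewrite !mxE => h1 h2; rewrite intrB h1 h2; ring.
  - by move=> g Tg; apply: Tline.
  move=> c ec; exists c => j; have := congr1 (fun M : 'M[rat]_(1,d) => M 0 j) ec.
  rewrite !mxE intrB => <-; ring.
have [i hi] : exists i, t 0 i != x0 0 i.
  have : t - x0 != 0 by rewrite subr_eq0.
  by case/rV0Pn => i; rewrite !mxE subr_eq0 => h; exists i.
have par : forall p q a b : pt d, S p -> S q -> S a -> S b ->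
      (p - q) 0 i *: (a - b) = (a - b) 0 i *: (p - q).
  move=> p q a b /Sdir [cp hp] /Sdir [cq hq] /Sdir [ca ha] /Sdir [cb hb].
  apply/matrixP => o j; rewrite [o]ord1 !mxE; apply: (@intr_inj rat).
  by rewrite !intrM !intrB !hp !hq !ha !hb; ring.
pose Q n := (0 < n)%N /\ exists p q, S p /\ S q /\ absz (p 0%R i - q 0%R i) = n.
have [delta [[dpos [p0 [q0 [Sp0 [Sq0 hd]]]]] hmin]] : exists m, Q m /\ forall k, (k < m)%N -> ~ Q k.
  apply: (@minimal Q (absz (t 0%R i - x0 0%R i))); split; last first.
    by exists t, x0; split; [exact: ST|split; [exact: ST|]].
  by move: hi; rewrite -subr_eq0; case: (t 0 i - x0 0 i) => // -[].
have mn : forall p q : pt d, S p -> S q -> p 0 i != q 0 i -> (delta <= absz (p 0%R i - q 0%R i))%N.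
  move=> p q Sp Sq hpq; rewrite leqNgt; apply/negP => hlt; apply: (hmin _ hlt); split.
    by move: hpq; rewrite -subr_eq0; case: (p 0 i - q 0 i) => // -[].
  by exists p, q.
have hd' : absz (q0 0%R i - p0 0%R i) = delta by rewrite -hd -opprB abszN.
have K1 := key Sc Sn par mn Sq0 Sp0 hd dpos.
have K2 := key Sc Sn par mn Sp0 Sq0 hd' dpos.
have HT : forall g, S g -> exists k : int, g - q0 = k *: (p0 - q0).
  move=> g Sg; case: (lerP 0 ((g 0 i - q0 0 i) * (p0 0 i - q0 0 i))) => h.
    exact: K1.
  have [|k ek] := K2 g Sg.
    move: h; move: (g 0 i) (p0 0 i) (q0 0 i) => x y z h.
    have e : (x - y) * (z - y) = (y - z) * (y - z) - (x - z) * (y - z) by ring.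
    rewrite e; have := sqr_ge0 (y - z); lra.
  exists (1 - k); apply/matrixP => o j; rewrite [o]ord1.
  have := congr1 (fun M : pt d => M 0 j) ek; rewrite !mxE.
  move: (g 0 j) (p0 0 j) (q0 0 j) => a b c e.
  have -> : a = b + k * (c - b) by rewrite -e; ring.
  ring.
have [k ek] : exists k : int, l - q0 = k *: (p0 - q0).
  apply: (Ll (fun y => exists k : int, y = k *: (p0 - q0))).
  - split; first by exists 0; rewrite scale0r.
    by move=> a b [ka ->] [kb ->]; exists (ka - kb); rewrite scalerBl.
  - by move=> g /ST /HT.
have hl : l = q0 + k *: (p0 - q0) by rewrite -ek addrC subrK.
case: (lerP 0 k) => hk.
  have hl' : l = q0 + (absz k)%:Z *: (p0 - q0) by rewrite gez0_abs.
  rewrite hl' in nl *; apply: step => //; exact: Sn.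
have hl' : l = p0 + (absz (1 - k))%:Z *: (q0 - p0).
  have -> : (absz (1 - k))%:Z = 1 - k by rewrite gez0_abs //; lia.
  rewrite hl; apply/matrixP => o j; rewrite !mxE; ring.
rewrite hl' in nl *; apply: step => //; exact: Sn.
Qed.
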